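(* Let $\mathbf{A}$ be a (left and right) Ore domain. Then the following are equivalent: (ii) every finitely generated torsion-free (left or right) $\mathbf{A}$-module is stably free; (iii) every finitely generated left ideal and every finitely generated right ideal of $\mathbf{A}$ is stably free.
   Context: Rings are associative with $1$, not necessarily commutative. An Ore domain is a domain satisfying the left and right Ore conditions. A module $P$ over $\mathbf{A}$ is stably free if there exist integers $q\ge 0$, $r\ge 0$ with $P\oplus \mathbf{A}^{q}\cong \mathbf{A}^{q+r}$. A module $M$ over a domain is torsion-free if $am=0$ with $a\neq 0$ implies $m=0$. An Ore domain satisfying these equivalent conditions is called a semistably free ideal domain. *)

(* Defs.v *)
(* Noncommutative rings = nzRingType; a right A-module is a
   left module over the converse ring A^c. *)
From HB Require Import structures.
From mathcomp Require Import all_boot all_order all_algebra.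
Set Implicit Arguments. Unset Strict Implicit. Unset Printing Implicit Defensive.
Import GRing.Theory.
Local Open Scope ring_scope.

Definition is_domain (A : nzRingType) : Prop :=
  forall a b : A, a * b = 0 -> a = 0 \/ b = 0.

Definition left_ore (A : nzRingType) : Prop :=
  forall a b : A, a != 0 -> b != 0 ->
    exists c d : A, c * a = d * b /\ c * a != 0.

Definition right_ore (A : nzRingType) : Prop :=
  forall a b : A, a != 0 -> b != 0 ->
    exists c d : A, a * c = b * d /\ a * c != 0.

Definition ore_domain (A : nzRingType) : Prop :=
  is_domain A /\ left_ore A /\ right_ore A.

Definition fg_sub (A : nzRingType) (M : lmodType A) (S : {pred M}) : Prop :=
  exists (n : nat) (v : 'I_n -> M),
    forall x : M, x \in S <-> exists c : 'I_n -> A, x = \sum_(i < n) c i *: v i.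

Definition fg_module (A : nzRingType) (M : lmodType A) : Prop :=
  fg_sub (predT : {pred M}).

Definition torsion_free (A : nzRingType) (M : lmodType A) : Prop :=
  forall (a : A) (m : M), a != 0 -> a *: m = 0 -> m = 0.

(* The submodule S of M is stably free: S (+) A^q ≅ A^(q+r).
   An A-linear map h : S (+) A^q -> A^(q+r) is given by its two components
   f = h(-,0) (linear on S) and g = h(0,-) (linear), h(x,v) = f x + g v. *)
Definition stably_free_sub (A : nzRingType) (M : lmodType A) (S : {pred M})
  : Prop :=
  exists (q r : nat) (f : M -> 'rV[A]_(q + r)) (g : 'rV[A]_q -> 'rV[A]_(q + r)),
    (forall x y, x \in S -> y \in S -> f (x + y) = f x + f y) /\
        (forall (a : A) x, x \in S -> f (a *: x) = a *: f x) /\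
        (forall u v, g (u + v) = g u + g v) /\
        (forall (a : A) u, g (a *: u) = a *: g u) /\
        (forall x x' u u', x \in S -> x' \in S ->
            f x + g u = f x' + g u' -> x = x' /\ u = u') /\
        (forall w, exists x u, x \in S /\ f x + g u = w).

Definition stably_free (A : nzRingType) (M : lmodType A) : Prop :=
  stably_free_sub (predT : {pred M}).

(* left ideals of A = submodules of the regular left module A^o;
   right ideals = submodules of (A^c)^o (x *: y = y * x). *)
Definition fg_tf_left_modules_stably_free (A : nzRingType) : Prop :=
  forall M : lmodType A, fg_module M -> torsion_free M -> stably_free M.

Definition fg_left_ideals_stably_free (A : nzRingType) : Prop :=
  forall I : {pred A^o}, fg_sub I -> stably_free_sub I.

(* Main.v *)
Require Import Defs.
From HB Require Import structures.
From mathcomp Require Import all_boot all_order all_algebra.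
From Stdlib Require Import ClassicalEpsilon Classical.
Set Implicit Arguments. Unset Strict Implicit. Unset Printing Implicit Defensive.
Import GRing.Theory.
Local Open Scope ring_scope.

Definition asb (P : Prop) : bool := if excluded_middle_informative P then true else false.
Lemma asbP (P : Prop) : asb P <-> P.
Proof. by rewrite /asb; case: excluded_middle_informative. Qed.

Definition span (B : nzRingType) (M : lmodType B) n (v : 'I_n -> M) (x : M) : Prop :=
  exists c : 'I_n -> B, x = \sum_i c i *: v i.

Section Span.
Variables (B : nzRingType) (M : lmodType B) (n : nat) (v : 'I_n -> M).
Lemma span0 : span v 0.
Proof. exists (fun _ => 0); by rewrite big1 // => i _; rewrite scale0r. Qed.
Lemma spanD x y : span v x -> span v y -> span v (x + y).
Proof.
move=> [c ->] [d ->]; exists (fun i => c i + d i).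
by rewrite -big_split; apply: eq_bigr => i _; rewrite scalerDl.
Qed.
Lemma spanZ a x : span v x -> span v (a *: x).
Proof.
move=> [c ->]; exists (fun i => a * c i).
by rewrite scaler_sumr; apply: eq_bigr => i _; rewrite scalerA.
Qed.
Lemma spanN x : span v x -> span v (- x).
Proof. by move=> h; rewrite -scaleN1r; apply: spanZ. Qed.
Lemma span_gen i : span v (v i).
Proof.
exists (fun j => if j == i then 1 else 0).
rewrite (bigD1 i) //= eqxx scale1r big1 ?addr0 // => j /negbTE ->.
by rewrite scale0r.
Qed.
End Span.

Lemma lin_sum (B : nzRingType) (M V : lmodType B) (P : M -> Prop) (f : M -> V)
  (P0 : P 0) (PD : forall x y, P x -> P y -> P (x + y))
  (PZ : forall a x, P x -> P (a *: x))
  (fD : forall x y, P x -> P y -> f (x + y) = f x + f y)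
  (fZ : forall a x, P x -> f (a *: x) = a *: f x)
  n (v : 'I_n -> M) (hv : forall i, P (v i)) (c : 'I_n -> B) :
  P (\sum_i c i *: v i) /\ f (\sum_i c i *: v i) = \sum_i c i *: f (v i).
Proof.
have f0 : f 0 = 0.
  have := fD 0 0 P0 P0; rewrite addr0 => h.
  by apply: (addrI (f 0)); rewrite addr0 -h.
apply: (big_rec2 (fun x y => P x /\ f x = y)); first by split.
move=> i x y _ [Px <-]; split; first by apply: PD => //; apply: PZ.
by rewrite fD ?fZ //; apply: PZ.
Qed.

Lemma f0_of (B : nzRingType) (M V : lmodType B) (P : M -> Prop) (f : M -> V)
  (P0 : P 0) (fD : forall x y, P x -> P y -> f (x + y) = f x + f y) : f 0 = 0.
Proof.
have := fD 0 0 P0 P0; rewrite addr0 => h.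
by apply: (addrI (f 0)); rewrite addr0 -h.
Qed.

Definition SFR (B : nzRingType) (M : lmodType B) (S : M -> Prop) : Prop :=
  exists (q N r : nat) (f : M -> 'rV[B]_N) (g : 'rV[B]_q -> 'rV[B]_N),
    N = (q + r)%N /\
    (forall x y, S x -> S y -> f (x + y) = f x + f y) /\
    (forall (a : B) x, S x -> f (a *: x) = a *: f x) /\
    (forall u v, g (u + v) = g u + g v) /\
    (forall (a : B) u, g (a *: u) = a *: g u) /\
    (forall x x' u u', S x -> S x' -> f x + g u = f x' + g u' -> x = x' /\ u = u') /\
    (forall w, exists x u, S x /\ f x + g u = w).

Lemma SFR_sf (B : nzRingType) (M : lmodType B) (S : {pred M}) :
  SFR (fun x => x \in S) -> stably_free_sub S.
Proof.
move=> [q [N [r [f [g [EN H]]]]]]; subst N.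
by exists q, r, f, g.
Qed.

Lemma sf_SFR (B : nzRingType) (M : lmodType B) (S : {pred M}) :
  stably_free_sub S -> SFR (fun x => x \in S).
Proof.
move=> [q [r [f [g H]]]].
by exists q, (q + r)%N, r, f, g.
Qed.

Definition fgP (B : nzRingType) (M : lmodType B) (S : M -> Prop) :=
  exists n (v : 'I_n -> M), forall x, S x <-> span v x.

Section Rows.
Variable B : nzRingType.
Hypothesis hI : fg_left_ideals_stably_free B.

Lemma rows_base (S : 'rV[B]_0 -> Prop) : fgP S -> SFR S.
Proof.
move=> [n [v hv]].
exists 0%N, 0%N, 0%N, (fun _ => 0), (fun _ => 0).
do 5 (split; first by move=> *; rewrite ?addr0 ?scaler0).
split; first by move=> *; split; apply/rowP => -[].
move=> w; exists 0, 0; split; last by apply/rowP => -[].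
by apply/hv; apply: span0.
Qed.

Definition hd k (x : 'rV[B]_(1 + k)) : B := x 0 (lshift k 0).
Definition tl k (x : 'rV[B]_(1 + k)) : 'rV[B]_k := rsubmx x.

Lemma hdD k (x y : 'rV[B]_(1 + k)) : hd (x + y) = hd x + hd y.
Proof. by rewrite /hd mxE. Qed.
Lemma hdZ k a (x : 'rV[B]_(1 + k)) : hd (a *: x) = a * hd x.
Proof. by rewrite /hd mxE. Qed.
Lemma tlD k (x y : 'rV[B]_(1 + k)) : tl (x + y) = tl x + tl y.
Proof. by apply/rowP => j; rewrite /tl !mxE. Qed.
Lemma tlZ k a (x : 'rV[B]_(1 + k)) : tl (a *: x) = a *: tl x.
Proof. by apply/rowP => j; rewrite /tl !mxE. Qed.
Lemma hd_row k (y : 'rV[B]_k) c : hd (row_mx (c : 'rV_1) y) = c 0 0.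
Proof. by rewrite /hd row_mxEl. Qed.
Lemma tl_row k (y : 'rV[B]_k) (c : 'rV_1) : tl (row_mx c y) = y.
Proof. by rewrite /tl row_mxKr. Qed.
Lemma hd0_split k (x : 'rV[B]_(1 + k)) : hd x = 0 -> x = row_mx 0 (tl x).
Proof.
move=> h; rewrite -{1}(hsubmxK x) /tl; congr row_mx.
by apply/matrixP => i j; rewrite !ord1 !mxE -h /hd.
Qed.

Lemma rows_step k (S : 'rV[B]_(1 + k) -> Prop) :
  (forall S' : 'rV[B]_k -> Prop, fgP S' -> SFR S') -> fgP S -> SFR S.
Proof.
move=> IH [n [w hw]].
have S0 : S 0 by apply/hw; apply: span0.
have SD x y : S x -> S y -> S (x + y).
  by move=> /hw ? /hw ?; apply/hw; apply: spanD.
have SZ a x : S x -> S (a *: x) by move=> /hw ?; apply/hw; apply: spanZ.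
pose I : {pred B^o} := fun a => asb (exists x, S x /\ hd x = a).
have II a : a \in I <-> exists x, S x /\ hd x = a.
  by rewrite /I unfold_in; apply: asbP.
have I0 : (0 : B^o) \in I by apply/II; exists 0; split => //; rewrite /hd mxE.
have ID a b : a \in I -> b \in I -> a + b \in I.
  move=> /II [x [Sx <-]] /II [y [Sy <-]]; apply/II; exists (x + y).
  by split; [apply: SD | rewrite hdD].
have IZ (a : B) (b : B^o) : b \in I -> a *: b \in I.
  move=> /II [x [Sx <-]]; apply/II; exists (a *: x).
  by split; [apply: SZ | rewrite hdZ].
have fgI : fg_sub I.
  exists n, (fun i => hd (w i)) => a; split.
    move=> /II [x [/hw [c ->] <-]]; exists c.
    have [_ ->] := @lin_sum B _ B^o (fun _ => True) (@hd k) ltac:(by [])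
      ltac:(by []) ltac:(by []) ltac:(by move=> *; rewrite hdD)
      ltac:(by move=> *; rewrite hdZ) _ w ltac:(by []) c.
    by [].
  move=> [c ->]; apply/II; exists (\sum_i c i *: w i); split.
    by apply/hw; exists c.
  have [_ ->] := @lin_sum B _ B^o (fun _ => True) (@hd k) ltac:(by [])
      ltac:(by []) ltac:(by []) ltac:(by move=> *; rewrite hdD)
      ltac:(by move=> *; rewrite hdZ) _ w ltac:(by []) c.
  by [].
have [q [N [r [fI [gI [EN [fID [fIZ [gID [gIZ [inj sur]]]]]]]]]]] :=
  sf_SFR (hI fgI).
have : forall j : 'I_N, exists p : 'rV[B]_(1 + k) * 'rV[B]_q,
    S p.1 /\ fI (hd p.1) + gI p.2 = delta_mx 0 j.
  move=> j; have [x [u [/II [s [Ss <-]] E]]] := sur (delta_mx 0 j).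
  by exists (s, u).
case/fin_all_exists => sp Hsp.
pose sec (a : B^o) : 'rV[B]_(1 + k) := \sum_j (fI a) 0 j *: (sp j).1.
have gI0 : gI 0 = 0 := @f0_of B _ _ (fun _ => True) gI ltac:(by [])
    ltac:(by move=> *; rewrite gID).
have secS a : S (sec a).
  have [] := @lin_sum B _ _ S (fun x => x) S0 SD SZ ltac:(by []) ltac:(by [])
    _ (fun j => (sp j).1) ltac:(by move=> j; case: (Hsp j)) (fun j => (fI a) 0 j).
  by [].
have hdsec a : a \in I -> hd (sec a) = a.
  move=> Ia.
  have [_ E1] := @lin_sum B _ B^o (fun _ => True) (@hd k) ltac:(by [])
      ltac:(by []) ltac:(by []) ltac:(by move=> *; rewrite hdD)
      ltac:(by move=> *; rewrite hdZ) _ (fun j => (sp j).1) ltac:(by [])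
      (fun j => (fI a) 0 j).
  rewrite /sec E1.
  have Ij j : hd (sp j).1 \in I by apply/II; exists (sp j).1; case: (Hsp j).
  have [Iy Ey] := @lin_sum B _ _ (fun x => x \in I) fI I0 ID IZ fID fIZ
      _ (fun j => hd (sp j).1) Ij (fun j => (fI a) 0 j).
  have [_ Eg] := @lin_sum B _ _ (fun _ => True) gI ltac:(by [])
      ltac:(by []) ltac:(by []) ltac:(by move=> *; rewrite gID)
      ltac:(by move=> *; rewrite gIZ) _ (fun j => (sp j).2) ltac:(by [])
      (fun j => (fI a) 0 j).
  symmetry; apply: (proj1 (inj _ _ 0 (\sum_j (fI a) 0 j *: (sp j).2) Ia Iy _)).
  rewrite Ey Eg. 
  rewrite -big_split /= gI0 addr0 {1}(row_sum_delta (fI a)).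
  apply: eq_bigr => j _. rewrite -scalerDr.
  by case: (Hsp j) => _ ->.
have secD a b : a \in I -> b \in I -> sec (a + b) = sec a + sec b.
  move=> Ia Ib; rewrite /sec fID // -big_split /=.
  by apply: eq_bigr => j _; rewrite mxE scalerDl.
have secZ (a : B) (b : B^o) : b \in I -> sec (a *: b) = a *: sec b.
  move=> Ib; rewrite /sec fIZ // scaler_sumr.
  by apply: eq_bigr => j _; rewrite mxE scalerA.
pose kap (x : 'rV[B]_(1 + k)) := tl (x - sec (hd x)).
have hdI x : S x -> hd x \in I by move=> Sx; apply/II; exists x.
have kapK x : S x -> x = sec (hd x) + row_mx 0 (kap x).
  move=> Sx; rewrite /kap -hd0_split; first by rewrite addrC subrK.
  by rewrite hdD -scaleN1r hdZ hdsec ?hdI // mulN1r addrN.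
pose K (y : 'rV[B]_k) := S (row_mx 0 y).
have kapKer x : S x -> K (kap x).
  move=> Sx; rewrite /K.
  have -> : row_mx 0 (kap x) = x + (-1) *: sec (hd x).
    by rewrite {2}(kapK x Sx) scaleN1r addrC addKr.
  by apply: SD => //; apply: SZ.
have kapD x y : S x -> S y -> kap (x + y) = kap x + kap y.
  move=> Sx Sy; rewrite /kap hdD secD ?hdI // -tlD; congr tl.
  by rewrite opprD addrACA.
have kapZ a x : S x -> kap (a *: x) = a *: kap x.
  move=> Sx; rewrite /kap hdZ -tlZ; congr tl.
  by rewrite (secZ a (hd x)) ?hdI // scalerBr.
have fI0 : fI 0 = 0 := @f0_of B _ _ (fun x => x \in I) fI I0 fID.
have sec0 : sec 0 = 0.
  by rewrite /sec fI0 big1 // => j _; rewrite mxE scale0r.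
have kap0 y : kap (row_mx 0 y) = y.
  rewrite /kap hd_row mxE sec0 subr0; exact: tl_row.
have Sw i : S (w i) by apply/hw; apply: span_gen.
have fgK : fgP K.
  exists n, (fun i => kap (w i)) => y; split.
    move=> Ky; have /hw [c Ec] := Ky.
    exists c.
    have [_ <-] := @lin_sum B _ _ S kap S0 SD SZ kapD kapZ _ w Sw c.
    by rewrite -Ec kap0.
  move=> [c ->].
  have [Sc <-] := @lin_sum B _ _ S kap S0 SD SZ kapD kapZ _ w Sw c.
  by apply: kapKer.
have [qK [NK [rK [fK [gK [ENK [fKD [fKZ [gKD [gKZ [injK surK]]]]]]]]]]] := IH K fgK.
have lD m1 m2 (u v : 'rV[B]_(m1 + m2)) : lsubmx (u + v) = lsubmx u + lsubmx v.
  by apply/rowP => j; rewrite !mxE.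
have rD m1 m2 (u v : 'rV[B]_(m1 + m2)) : rsubmx (u + v) = rsubmx u + rsubmx v.
  by apply/rowP => j; rewrite !mxE.
have lZ m1 m2 a (u : 'rV[B]_(m1 + m2)) : lsubmx (a *: u) = a *: lsubmx u.
  by apply/rowP => j; rewrite !mxE.
have rZ m1 m2 a (u : 'rV[B]_(m1 + m2)) : rsubmx (a *: u) = a *: rsubmx u.
  by apply/rowP => j; rewrite !mxE.
exists (qK + q)%N, (NK + N)%N, (rK + r)%N,
  (fun x => row_mx (fK (kap x)) (fI (hd x))),
  (fun u => row_mx (gK (lsubmx u)) (gI (rsubmx u))).
split; first by rewrite EN ENK addnACA.
split.
  have hdD' x y : hd (x + y) = (hd x : B^o) + (hd y : B^o) by rewrite hdD.
  move=> x y Sx Sy; rewrite kapD // hdD' (fKD _ _ (kapKer _ Sx) (kapKer _ Sy)). rewrite (@add_row_mx _ 1 NK N). exact: f_equal (fID _ _ (hdI _ Sx) (hdI _ Sy)).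
split.
  move=> a x Sx; rewrite kapZ // (fKZ _ _ (kapKer _ Sx)).
  have -> : hd (a *: x) = a *: (hd x : B^o) by rewrite hdZ.
  rewrite (@scale_row_mx _ 1 NK N). exact: f_equal (fIZ _ _ (hdI _ Sx)).
split; first by move=> u v; rewrite lD rD gKD gID (@add_row_mx _ 1 NK N).
split; first by move=> a u; rewrite lZ rZ gKZ gIZ (@scale_row_mx _ 1 NK N).
split.
  move=> x x' u u' Sx Sx'; rewrite !(@add_row_mx _ 1 NK N) => /eq_row_mx [E1 E2].
  have [e1 e2] := injK _ _ _ _ (kapKer _ Sx) (kapKer _ Sx') E1.
  have [e3 e4] := inj _ _ _ _ (hdI _ Sx) (hdI _ Sx') E2.
  split; first by rewrite (kapK x Sx) (kapK x' Sx') e1 e3.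
  by rewrite -(hsubmxK u) -(hsubmxK u') e2 e4.
move=> W.
have [y [uK [Ky EK]]] := surK (lsubmx W).
have [a [uI [Ia EI]]] := sur (rsubmx W).
have hx : hd (sec a + row_mx 0 y) = a.
  by rewrite hdD hdsec // hd_row mxE addr0.
exists (sec a + row_mx 0 y), (row_mx uK uI); split; first by apply: SD.
rewrite hx /kap hx [sec a + _]addrC addrK tl_row row_mxKl row_mxKr (@add_row_mx _ 1 NK N) EK EI.
exact: hsubmxK.
Qed.

Lemma rows_sf k (S : 'rV[B]_k -> Prop) : fgP S -> SFR S.
Proof.
elim: k S => [|k IH] S; first exact: rows_base.
exact: (@rows_step k S IH).
Qed.
End Rows.

Section Emb.
Variables (B : nzRingType) (hdom : is_domain B) (hl : left_ore B) (hr : right_ore B).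

Lemma mulf0 (x y : B) : x != 0 -> y != 0 -> x * y != 0.
Proof. by move=> hx hy; apply/eqP => /hdom [] /eqP; [rewrite (negbTE hx)|rewrite (negbTE hy)]. Qed.

Lemma rore_list (a : B) : a != 0 -> forall l : seq B,
  exists c, c != 0 /\ forall t, t \in l -> exists z, t * c = a * z.
Proof.
move=> a0; elim=> [|t l [c [c0 Hc]]]; first by exists 1; split => //; rewrite oner_eq0.
have [tc0|tc0] := eqVneq (t * c) 0.
  exists c; split => // t'; rewrite inE => /orP [/eqP ->|/Hc //].
  by exists 0; rewrite tc0 mulr0.
have [c' [d [E nz]]] := hr tc0 a0.
exists (c * c'); split.
  by apply/eqP => h; move: nz; rewrite -mulrA h mulr0 eqxx.
move=> t'; rewrite inE => /orP [/eqP ->|/Hc [z Ez]].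
  by exists d; rewrite mulrA.
by exists (z * c'); rewrite mulrA Ez mulrA.
Qed.

Definition rmul k (c : B) (y : 'rV[B]_k) : 'rV[B]_k := \row_j (y 0 j * c).
Lemma rmulD k c (y y' : 'rV[B]_k) : rmul c (y + y') = rmul c y + rmul c y'.
Proof. by apply/rowP => j; rewrite !mxE mulrDl. Qed.
Lemma rmulZ k c a (y : 'rV[B]_k) : rmul c (a *: y) = a *: rmul c y.
Proof. by apply/rowP => j; rewrite !mxE mulrA. Qed.
Lemma rmul0 k c : rmul c (0 : 'rV[B]_k) = 0.
Proof. by apply/rowP => j; rewrite !mxE mul0r. Qed.
Lemma rmul_inj k c (y : 'rV[B]_k) : c != 0 -> rmul c y = 0 -> y = 0.
Proof.
move=> c0 /rowP h; apply/rowP => j; move: (h j); rewrite !mxE => /hdom [] //.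
by move=> e; move: c0; rewrite e eqxx.
Qed.
Lemma rowZ0 k (p : B) (y : 'rV[B]_k) : p != 0 -> p *: y = 0 -> y = 0.
Proof.
move=> p0 /rowP h; apply/rowP => j; move: (h j); rewrite !mxE => /hdom [] //.
by move=> e; move: p0; rewrite e eqxx.
Qed.

Lemma rore_row (a : B) k (y : 'rV[B]_k) : a != 0 ->
  exists c (z : 'rV[B]_k), c != 0 /\ rmul c y = a *: z.
Proof.
move=> a0; have [c [c0 Hc]] := rore_list a0 [seq y 0 j | j <- enum 'I_k].
have : forall j : 'I_k, exists z, y 0 j * c = a * z.
  by move=> j; apply: Hc; apply: map_f; rewrite mem_enum.
case/fin_all_exists => zf Hz.
exists c, (\row_j zf j); split => //; apply/rowP => j; by rewrite !mxE Hz.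
Qed.

Variables (M : lmodType B) (htf : torsion_free M).

Definition embeds (Q : M -> Prop) := exists k (phi : M -> 'rV[B]_k),
  (forall x y, Q x -> Q y -> phi (x + y) = phi x + phi y) /\
  (forall a x, Q x -> phi (a *: x) = a *: phi x) /\
  (forall x, Q x -> phi x = 0 -> x = 0).

Section Ext.
Variables (P : M -> Prop) (P0 : P 0) (PD : forall x y, P x -> P y -> P (x + y))
  (PZ : forall a x, P x -> P (a *: x)) (w : M).
Let Q x := exists s b, P s /\ x = s + b *: w.

Lemma ext_V K (V : M -> B -> 'rV[B]_K)
  (V1 : forall s s' b b', P s -> P s' -> V (s + s') (b + b') = V s b + V s' b')
  (V2 : forall a s b, P s -> V (a *: s) (a * b) = a *: V s b)
  (V3 : forall s b, P s -> (s + b *: w = 0 <-> V s b = 0)) : embeds Q.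
Proof.
have PN x : P x -> P (- x) by move=> Px; rewrite -scaleN1r; apply: PZ.
have wd s s' b b' : P s -> P s' -> s + b *: w = s' + b' *: w -> V s b = V s' b'.
  move=> Ps Ps' E.
  have d : (s - s') + (b - b') *: w = 0.
    by rewrite scalerBl addrACA -opprD E subrr.
  have /(V3 _ _ (PD Ps (PN _ Ps'))) d' := d.
  transitivity (V (s' + (s - s')) (b' + (b - b'))).
    by rewrite [s' + _]addrC subrK [b' + _]addrC subrK.
  by rewrite V1 ?d' ?addr0 //; apply: PD => //; apply: PN.
pose phi x := let p := epsilon (inhabits ((0 : M), (0 : B)))
   (fun p => P p.1 /\ x = p.1 + p.2 *: w) in V p.1 p.2.
have phiE x s b : P s -> x = s + b *: w -> phi x = V s b.
  move=> Ps Ex; rewrite /phi.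
  set p := epsilon _ _.
  have [Pp Ep] : P p.1 /\ x = p.1 + p.2 *: w.
    by apply: (epsilon_spec _ (fun p => P p.1 /\ x = p.1 + p.2 *: w)); exists (s, b).
  by apply: wd => //; rewrite -Ep.
exists K, phi; split.
  move=> x y [s [b [Ps ->]]] [s' [b' [Ps' ->]]].
  rewrite (phiE _ _ _ Ps erefl) (phiE _ _ _ Ps' erefl) -V1 //.
  by apply: phiE; [apply: PD | rewrite scalerDl addrACA].
split.
  move=> a x [s [b [Ps ->]]].
  rewrite (phiE _ _ _ Ps erefl) -V2 //.
  by apply: phiE; [apply: PZ | rewrite scalerDr scalerA].
move=> x [s [b [Ps ->]]]; rewrite (phiE _ _ _ Ps erefl).
by move/(V3 _ _ Ps).
Qed.

Hypothesis hP : embeds P.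

Lemma ext_step : embeds Q.
Proof.
have [k [phi [phiD [phiZ phiI]]]] := hP.
have phi0 : phi 0 = 0 := @f0_of B _ _ P phi P0 phiD.
have [HA|HB] := classic (forall a, P (a *: w) -> a = 0).
  pose V s b : 'rV[B]_(k + 1) := row_mx (phi s) (const_mx b : 'rV[B]_1).
  apply: (@ext_V _ V).
  - move=> s s' b b' Ps Ps'; rewrite /V (@add_row_mx _ 1 k 1) phiD //.
    by congr row_mx; apply/rowP => j; rewrite !mxE.
  - move=> a s b Ps; rewrite /V (@scale_row_mx _ 1 k 1) phiZ //.
    by congr row_mx; apply/rowP => j; rewrite !mxE.
  - move=> s b Ps; split.
      move=> E; have Pbw : P (b *: w).
        have -> : b *: w = - s by rewrite -[b *: w](addKr s) E addr0.
        rewrite -scaleN1r; exact: PZ.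
      have b0 := HA _ Pbw; move: E; rewrite b0 scale0r addr0 => ->.
      rewrite /V phi0 -(@row_mx0 _ 1 k 1); by congr row_mx.
    rewrite /V -(@row_mx0 _ 1 k 1) => /eq_row_mx [E1 E2].
    have b0 : b = 0 by move/rowP: E2 => /(_ 0); rewrite !mxE.
    by rewrite b0 scale0r addr0; apply: phiI.
have [a [Pa a0]] : exists a, P (a *: w) /\ a != 0.
  apply: NNPP => hn; apply: HB => a Pa; apply: NNPP => a0; apply: hn.
  by exists a; split => //; apply/eqP.
have [c [z [c0 Ez]]] := rore_row (phi (a *: w)) a0.
pose V s b : 'rV[B]_k := rmul c (phi s) + b *: z.
apply: (@ext_V _ V).
- move=> s s' b b' Ps Ps'; rewrite /V phiD // rmulD scalerDl.
  by rewrite addrACA.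
- move=> a' s b Ps; rewrite /V phiZ // rmulZ -scalerA scalerDr.
  by [].
have key s b p r : P s -> p * b = r * a ->
    p *: V s b = rmul c (phi (p *: s + r *: (a *: w))).
  move=> Ps E; rewrite (phiD _ _ (PZ p Ps) (PZ r Pa)) (phiZ _ _ Ps) (phiZ _ _ Pa).
  rewrite rmulD !rmulZ Ez /V scalerDr !scalerA E.
  by [].
have keyE s b p r : p * b = r * a -> p *: s + r *: (a *: w) = p *: (s + b *: w).
  by move=> E; rewrite scalerA -E -scalerA scalerDr.
move=> s b Ps; split.
  have [->|b0] := eqVneq b 0.
    by rewrite scale0r addr0 => ->; rewrite /V phi0 rmul0 scale0r addr0.
  move=> E.
  have [p [r [Epr nz]]] := hl b0 a0.
  have p0 : p != 0 by apply/eqP => h; move: nz; rewrite h mul0r eqxx.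
  apply: (rowZ0 p0); rewrite (key _ _ _ _ Ps Epr) (keyE s b p r Epr) E scaler0 phi0.
  exact: rmul0.
have [->|b0] := eqVneq b 0.
  rewrite /V scale0r scale0r !addr0 => h; apply: phiI => //; exact: (rmul_inj c0 h).
move=> E.
have [p [r [Epr nz]]] := hl b0 a0.
have p0 : p != 0 by apply/eqP => h; move: nz; rewrite h mul0r eqxx.
have PX : P (p *: s + r *: (a *: w)) by apply: PD; apply: PZ.
have := key _ _ _ _ Ps Epr; rewrite E scaler0 => /esym /(rmul_inj c0).
move=> /(phiI _ PX); rewrite (keyE s b p r Epr).
exact: htf.
Qed.
End Ext.

Lemma emb_all n (v : 'I_n -> M) : embeds (span v).
Proof.
elim: n v => [|n IH] v.
  exists 0%N, (fun _ => 0); split; first by move=> *; rewrite addr0.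
  split; first by move=> *; rewrite scaler0.
  by move=> x [c ->] _; rewrite big_ord0.
pose v' (i : 'I_n) := v (widen_ord (leqnSn n) i).
have P0 := span0 v'.
have PD := @spanD _ _ _ v'.
have PZ := @spanZ _ _ _ v'.
have [k [phi [phiD [phiZ phiI]]]] := ext_step P0 PD PZ (v ord_max) (IH v').
have sub x : span v x -> exists s b, span v' s /\ x = s + b *: v ord_max.
  move=> [c ->]; rewrite big_ord_recr /=.
  exists (\sum_(i < n) c (widen_ord (leqnSn n) i) *: v' i), (c ord_max).
  by split => //; exists (fun i => c (widen_ord (leqnSn n) i)).
exists k, phi; split; first by move=> x y /sub ? /sub ?; apply: phiD.
split; first by move=> a x /sub ?; apply: phiZ.
by move=> x /sub ?; apply: phiI.
Qed.
End Emb.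

Section Sub.
Variables (B : nzRingType) (M : lmodType B) (S : {pred M}).
Hypothesis (h0 : 0 \in S) (hD : forall x y, x \in S -> y \in S -> x + y \in S)
 (hZ : forall a x, x \in S -> a *: x \in S).
Definition subT : Type := let _ := (h0, hD, hZ) in {x : M | x \in S}.
HB.instance Definition _ := Choice.on subT.
Definition sz : subT := exist _ 0 h0.
Definition sadd (x y : subT) : subT := exist _ (sval x + sval y) (hD (proj2_sig x) (proj2_sig y)).
Definition sopp (x : subT) : subT := exist _ (- sval x) (eq_ind _ (fun z => z \in S) (hZ (-1) (proj2_sig x)) _ (scaleN1r _)).
Lemma sE (x y : subT) : sval x = sval y -> x = y.
Proof. by move=> h; apply: val_inj. Qed.
Lemma saddA : associative sadd. Proof. by move=> x y z; apply: sE; rewrite /= addrA. Qed.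
Lemma saddC : commutative sadd. Proof. by move=> x y; apply: sE; rewrite /= addrC. Qed.
Lemma sadd0 : left_id sz sadd. Proof. by move=> x; apply: sE; rewrite /= add0r. Qed.
Lemma saddN : left_inverse sz sopp sadd. Proof. by move=> x; apply: sE; rewrite /= addNr. Qed.
HB.instance Definition _ := GRing.isZmodule.Build subT saddA saddC sadd0 saddN.
Definition sscale (a : B) (x : subT) : subT := exist _ (a *: sval x) (hZ a (proj2_sig x)).
Lemma sc1 : forall a b v, sscale a (sscale b v) = sscale (a * b) v.
Proof. by move=> a b v; apply: sE; rewrite /= scalerA. Qed.
Lemma sc2 : left_id 1 sscale. Proof. by move=> v; apply: sE; rewrite /= scale1r. Qed.
Lemma sc3 : right_distributive sscale +%R. Proof. by move=> a u v; apply: sE; rewrite /= scalerDr. Qed.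
Lemma sc4 : forall v, {morph sscale^~ v: a b / a + b}. Proof. by move=> v a b; apply: sE; rewrite /= scalerDl. Qed.
HB.instance Definition _ := GRing.Zmodule_isLmodule.Build B subT sc1 sc2 sc3 sc4.
Lemma svalD (x y : subT) : sval (x + y) = sval x + sval y. Proof. by []. Qed.
Lemma svalZ a (x : subT) : sval (a *: x) = a *: sval x. Proof. by []. Qed.
End Sub.

Lemma ideals_from_tf (B : nzRingType) (hdom : is_domain B)
  (hM : fg_tf_left_modules_stably_free B) : fg_left_ideals_stably_free B.
Proof.
move=> I [n [v hv]].
have h0 : (0 : B^o) \in I by apply/hv; exact: span0.
have hD : forall x y : B^o, x \in I -> y \in I -> x + y \in I.
  by move=> x y /hv ? /hv ?; apply/hv; apply: spanD.
have hZ : forall (a : B) (x : B^o), x \in I -> a *: x \in I.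
  by move=> a x /hv ?; apply/hv; apply: spanZ.
pose T := subT h0 hD hZ.
have vI i : v i \in I by apply/hv; apply: span_gen.
pose vv (i : 'I_n) : T := exist _ (v i) (vI i).
have svsum (c : 'I_n -> B) : sval (\sum_i c i *: vv i) = \sum_i c i *: v i.
  have [_ ->] := @lin_sum B T B^o (fun _ => True) (fun z : T => sval z) ltac:(by [])
    ltac:(by []) ltac:(by []) ltac:(by move=> x y _ _; apply: svalD)
    ltac:(by move=> a x _; apply: svalZ) _ vv ltac:(by []) c.
  by [].
have fgT : fg_module T.
  exists n, vv => z; split => // _.
  have /hv [c Ec] := proj2_sig z.
  exists c; apply: sE; by rewrite svsum.
have tfT : torsion_free T.
  move=> a z a0 E; apply: sE.
  have := f_equal (fun t : T => sval t) E; rewrite svalZ /= => /hdom [] //.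
  by move=> e; move: a0; rewrite e eqxx.
have [q [r [f [g [fD [fZ [gD [gZ [inj sur]]]]]]]]] := hM T fgT tfT.
pose F (a : B^o) := f (epsilon (inhabits (sz h0 hD hZ : T)) (fun z : T => sval z = a)).
have Fe a (z : T) : sval z = a -> F a = f z.
  move=> E; rewrite /F; congr f; apply: sE; rewrite E.
  by apply: (epsilon_spec _ (fun z : T => sval z = a)); exists z.
exists q, r, F, g; split.
  move=> x y Ix Iy.
  rewrite (Fe x (exist _ x Ix)) // (Fe y (exist _ y Iy)) //.
  by rewrite -fD //; apply: Fe.
split.
  move=> a x Ix; rewrite (Fe x (exist _ x Ix)) // -fZ //; by apply: Fe.
split => //; split => //; split.
  move=> x x' u u' Ix Ix'.
  rewrite (Fe x (exist _ x Ix)) // (Fe x' (exist _ x' Ix')) // => E.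
  have [e1 e2] := inj _ _ _ _ isT isT E.
  by split => //; move: (f_equal (fun t : T => sval t) e1).
move=> W; have [z [u [_ E]]] := sur W.
exists (sval z), u; split; first exact: (proj2_sig z).
by rewrite (Fe _ z).
Qed.

Lemma tf_from_ideals (B : nzRingType) (hB : ore_domain B)
  (hI : fg_left_ideals_stably_free B) : fg_tf_left_modules_stably_free B.
Proof.
move=> M [n [v hv]] htf.
have [hdom [hl hr]] := hB.
have all x : span v x by apply: (proj1 (hv x)).
have [k [phi [phiD [phiZ phiI]]]] := emb_all hdom hl hr htf v.
pose S (y : 'rV[B]_k) := exists x, y = phi x.
have fgS : fgP S.
  exists n, (fun i => phi (v i)) => y; split.
    move=> [x ->]; have [c ->] := all x; exists c.
    have [_ ->] := @lin_sum B _ _ (span v) phi (span0 v) (@spanD _ _ _ v)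
      (@spanZ _ _ _ v) phiD phiZ _ v (@span_gen _ _ _ v) c.
    by [].
  move=> [c ->]; exists (\sum_i c i *: v i).
  have [_ ->] := @lin_sum B _ _ (span v) phi (span0 v) (@spanD _ _ _ v)
      (@spanZ _ _ _ v) phiD phiZ _ v (@span_gen _ _ _ v) c.
  by [].
have [q [N [r [f [g [EN [fD [fZ [gD [gZ [inj sur]]]]]]]]]]] := rows_sf hI fgS.
subst N.
have Sp x : S (phi x) by exists x.
exists q, r, (fun x => f (phi x)), g; split.
  by move=> x y _ _ /=; rewrite phiD // fD.
split; first by move=> a x _ /=; rewrite phiZ // fZ.
split => //; split => //; split.
  move=> x x' u u' _ _ /= E; have [e1 e2] := inj _ _ _ _ (Sp x) (Sp x') E.
  split => //; apply/eqP; rewrite -subr_eq0; apply/eqP; apply: phiI => //.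
  by rewrite -scaleN1r phiD // phiZ // scaleN1r e1 subrr.
move=> W; have [y [u [[x ->] E]]] := sur W.
by exists x, u.
Qed.

Lemma ore_conv (A : nzRingType) : ore_domain A -> ore_domain A^c.
Proof.
move=> [hd [hl hr]]; split; first by move=> a b /= h; case: (hd b a h) => ->; [right|left].
split; first by move=> a b a0 b0; exact: hr a b a0 b0.
by move=> a b a0 b0; exact: hl a b a0 b0.
Qed.

Theorem mainTheorem2 (A : nzRingType) (hA : ore_domain A) :
  (fg_tf_left_modules_stably_free A /\ fg_tf_left_modules_stably_free A^c)
  <-> (fg_left_ideals_stably_free A /\ fg_left_ideals_stably_free A^c).
Proof.
have hAc := ore_conv hA.
split=> [[h1 h2]|[h1 h2]]; split.
- exact: ideals_from_tf (proj1 hA) h1.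
- exact: ideals_from_tf (proj1 hAc) h2.
- exact: tf_from_ideals hA h1.
- exact: tf_from_ideals hAc h2.
Qed.
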